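(* For all $n,k\ge 0$, in $\mathbb{Z}[q]$, $$e(n,k)+o(n,k)\,q\equiv q^{\binom{k+1}{2}}\begin{bmatrix} n\\ k\end{bmatrix}_q \pmod{q^2-1},\qquad L(n,k)+\bar L(n,k)\,q\equiv \begin{bmatrix} n\\ k\end{bmatrix}_q\pmod{q^2-1}.$$
   Context: $e(n,k)$ (resp. $o(n,k)$) is the number of $k$-element subsets of $\{1,\dots,n\}$ with even (resp. odd) sum of elements, the empty set counting as even. $\begin{bmatrix} n\\ k\end{bmatrix}_q=\prod_{i=1}^{k}\frac{1-q^{n-k+i}}{1-q^i}$ is the Gaussian ($q$-)binomial coefficient (a polynomial in $q$, zero for $k>n$). Losanitsch's triangle $(L(n,k))$ is defined by $L(0,k)=[k=0]$, $L(1,k)=[k\le 1]$ for $k\ge0$, $L(n,k)=0$ for $k<0$, and for $n\ge 2$: $L(n,k)=L(n-2,k)+\binom{n-2}{k-1}+L(n-2,k-2)$ (with $\binom{m}{j}=0$ for $j<0$ or $j>m$). $\bar L(n,k)=\binom{n}{k}-L(n,k)$. *)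

(* Defs.v *)
From mathcomp Require Import all_boot all_order all_algebra.
Set Implicit Arguments. Unset Strict Implicit. Unset Printing Implicit Defensive.
Import GRing.Theory.
Local Open Scope ring_scope.

(* e(n,k): number of k-subsets of {1,...,n} with even element sum.
   Elements i : 'I_n represent the integer i+1. *)
Definition e_sub (n k : nat) : nat :=
  #|[set A : {set 'I_n} | (#|A| == k) && ~~ odd (\sum_(i in A) i.+1)%N]|.
Definition o_sub (n k : nat) : nat :=
  #|[set A : {set 'I_n} | (#|A| == k) && odd (\sum_(i in A) i.+1)%N]|.

Definition qbin (n k : nat) : {poly int} :=
  if (k <= n)%N then
    (\prod_(i < k) (1 - 'X^(n - k + i.+1))) %/ (\prod_(i < k) (1 - 'X^(i.+1)))
  else 0.

Fixpoint Los (n k : nat) {struct n} : nat :=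
  match n with
  | 0 => (k == 0%N)
  | 1 => (k <= 1)%N
  | n'.+2 => (Los n' k + (if k is k'.+1 then 'C(n', k') else 0)
              + (if k is k'.+2 then Los n' k' else 0))%N
  end.

Definition Losbar (n k : nat) : int := ('C(n, k))%:Z - (Los n k)%:Z.

Definition poly_congr (p r m : {poly int}) : Prop := exists s : {poly int}, p - r = s * m.

(* Main.v *)
Require Import Defs.
From mathcomp Require Import all_boot all_order all_algebra.
From mathcomp Require Import ring lra zify.
Import GRing.Theory.
Local Open Scope ring_scope.

Definition Pm (n k : nat) : int :=
  if odd k && ~~ odd n then 0 else ('C(n./2, k./2))%:Z.

Lemma Pm_ee a b : Pm a.*2 b.*2 = 'C(a, b).
Proof. by rewrite /Pm !odd_double !doubleK. Qed.
Lemma Pm_eo a b : Pm a.*2 b.*2.+1 = 0.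
Proof. by rewrite /Pm /= !odd_double. Qed.
Lemma Pm_oe a b : Pm a.*2.+1 b.*2 = 'C(a, b).
Proof. by rewrite /Pm /= !odd_double /= uphalf_double doubleK. Qed.
Lemma Pm_oo a b : Pm a.*2.+1 b.*2.+1 = 'C(a, b).
Proof. by rewrite /Pm /= !odd_double /= !uphalf_double. Qed.

Lemma parity n : (exists a, n = a.*2) \/ (exists a, n = a.*2.+1).
Proof.
rewrite -[n]odd_double_half; case: (odd n) => /=; [right|left]; by exists n./2.
Qed.

Lemma Pm_2 n k : Pm n.+2 k.+2 = Pm n k.+2 + Pm n k.
Proof.
rewrite /Pm /= !negbK. by case: (odd k && ~~ odd n); rewrite ?addr0 // binS PoszD addrC.
Qed.
Lemma Pm_20 n : Pm n.+2 0 = Pm n 0.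
Proof. by rewrite /Pm /= bin0 bin0. Qed.
Lemma Pm_21 n : Pm n.+2 1 = Pm n 1.
Proof. rewrite /Pm /= negbK; case: ifP => _ //; by rewrite bin0 bin0. Qed.
Lemma Pm_0 k : Pm 0 k = (k == 0%N)%:R.
Proof.
case: (parity k) => -[b ->]; rewrite -[0%N]/(0.*2)%N ?Pm_ee ?Pm_eo //.
by case: b.
Qed.
Lemma Pm_n0 n : Pm n 0 = 1.
Proof. by rewrite /Pm /= bin0. Qed.

Lemma sg_e b : (-1) ^+ b.*2 = 1 :> int.
Proof. by rewrite -signr_odd odd_double. Qed.
Lemma sg_o b : (-1) ^+ b.*2.+1 = -1 :> int.
Proof. by rewrite -signr_odd /= odd_double. Qed.

Lemma Pm_pascal n k : Pm n.+1 k.+1 = Pm n k + (-1) ^+ k.+1 * Pm n k.+1.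
Proof.
case: (parity n) => -[a ->]; case: (parity k) => -[b ->];
  rewrite -?doubleS ?Pm_ee ?Pm_eo ?Pm_oe ?Pm_oo ?sg_e ?sg_o.
- by rewrite mulr0 addr0.
- by rewrite mul1r add0r.
- by rewrite mulN1r subrr.
- by rewrite mul1r binS PoszD addrC.
Qed.

Definition Qm (n k : nat) : int := (-1) ^+ 'C(k.+1, 2) * Pm n k.

Lemma Qm_rec n k : Qm n.+1 k.+1 = Qm n k.+1 + (-1) ^+ n.+1 * Qm n k.
Proof.
rewrite /Qm [in 'C(k.+2, 2)]binS bin1 exprD.
set s := (-1) ^+ 'C(k.+1, 2).
case: (parity n) => -[a ->]; case: (parity k) => -[b ->];
  rewrite -?doubleS ?Pm_ee ?Pm_eo ?Pm_oe ?Pm_oo ?sg_e ?sg_o.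
- ring.
- ring.
- ring.
- rewrite binS PoszD; ring.
Qed.

Lemma Qm_0 k : Qm 0 k = (k == 0%N)%:R.
Proof. rewrite /Qm Pm_0; case: k => [|k] //=; by rewrite mulr0. Qed.
Lemma Qm_n0 n : Qm n 0 = 1.
Proof. by rewrite /Qm Pm_n0. Qed.

Fixpoint G (n k : nat) {struct n} : {poly int} :=
  match n, k with
  | 0, k => (k == 0%N)%:R
  | m.+1, 0 => 1
  | m.+1, j.+1 => G m j + 'X^(j.+1) * G m j.+1
  end.

Definition fac (m : nat) : {poly int} := \prod_(i < m) (1 - 'X^(i.+1)).

Lemma G_gt n k : (n < k)%N -> G n k = 0.
Proof.
elim: n k => [|n IH] [|k] //= H.
rewrite !IH ?mulr0 ?addr0 //; lia.
Qed.

Lemma facS m : fac m.+1 = fac m * (1 - 'X^(m.+1)).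
Proof. by rewrite /fac big_ord_recr. Qed.

Lemma G_fact n k : (k <= n)%N -> G n k * fac k * fac (n - k) = fac n.
Proof.
elim: n k => [|n IH] [|k] //= H.
- by rewrite /fac !big_ord0 !mul1r.
- by rewrite subn0 /fac big_ord0 !mul1r.
rewrite subSS (facS k) (facS n).
have H1 := IH k H.
case: (ltngtP k n) => Hkn; last first.
- subst k. rewrite (@G_gt n n.+1) // mulr0 addr0 subnn.
  rewrite subnn in H1. rewrite -[in RHS]H1. ring.
- lia.
have H2 := IH k.+1 Hkn.
have E : (n - k = (n - k.+1).+1)%N by lia.
have Efac : fac (n - k) = fac (n - k.+1) * (1 - 'X^(n - k)).
  by rewrite [in LHS]E facS -E.
have EX : 'X^(k.+1) * 'X^(n - k) = 'X^(n.+1) :> {poly int}.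
  by rewrite -exprD; congr (_ ^+ _); lia.
have key : (G n k + 'X^(k.+1) * G n k.+1) * (fac k * (1 - 'X^(k.+1))) * fac (n - k)
  = (G n k * fac k * fac (n - k)) * (1 - 'X^(k.+1)) +
    'X^(k.+1) * (G n k.+1 * (fac k * (1 - 'X^(k.+1))) * fac (n - k.+1)) * (1 - 'X^(n - k)).
  rewrite Efac; ring.
rewrite key -facS H1 H2 -EX; ring.
Qed.

Lemma num_fac m k : \prod_(i < k) (1 - 'X^(m + i.+1)) * fac m = fac (m + k) :> {poly int}.
Proof.
elim: k => [|k IH]; first by rewrite big_ord0 mul1r addn0.
by rewrite big_ord_recr /= addnS facS -IH; ring.
Qed.

Lemma lead_fac m : lead_coef (fac m) = (-1) ^+ m.
Proof.
rewrite /fac lead_coef_prod.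
rewrite (eq_bigr (fun _ => -1)) ?prodr_const ?card_ord // => i _.
by rewrite -opprB lead_coefN lead_coefXnsubC.
Qed.

Lemma fac_neq0 m : fac m != 0.
Proof. by rewrite -lead_coef_eq0 lead_fac signr_eq0. Qed.

Lemma qbinE n k : qbin n k = G n k.
Proof.
rewrite /qbin; case: ifP => Hk; last by rewrite G_gt //; lia.
have E : \prod_(i < k) (1 - 'X^(n - k + i.+1)) = G n k * fac k.
  apply: (mulIf (fac_neq0 (n - k))).
  by rewrite num_fac G_fact // subnK.
rewrite E Pdiv.IdomainUnit.mulpK // lead_fac.
by apply: unitrX; apply: unitrN1.
Qed.

Lemma G_one n k : (G n k).[1] = ('C(n, k))%:Z.
Proof.
elim: n k => [|n IH] [|k] /=; rewrite ?hornerC //.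
by rewrite hornerD hornerM hornerXn expr1n mul1r !IH binS PoszD addrC.
Qed.

Lemma G_m1 n k : (G n k).[-1] = Pm n k.
Proof.
elim: n k => [|n IH] [|k] /=; rewrite ?hornerC ?Pm_0 ?Pm_n0 //.
by rewrite hornerD hornerM hornerXn !IH Pm_pascal.
Qed.

Lemma congr_eval (p r : {poly int}) :
  (p - r).[1] = 0 -> (p - r).[-1] = 0 -> poly_congr p r ('X^2 - 1).
Proof.
move=> H1 H2.
have /factor_theorem [q Hq] : root (p - r) 1 by apply/rootP.
move: H2; rewrite Hq hornerM !hornerE => H2.
have Hq1 : q.[-1] = 0.
  apply/eqP; move/eqP: H2; rewrite mulf_eq0 => /orP [] // /eqP.
have /factor_theorem [s Hs] : root q (-1) by apply/rootP.
exists s; rewrite Hq Hs -mulrA; congr (_ * _).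
rewrite polyCN opprK; ring.
Qed.

Lemma LosSS n k : Los n.+2 k = (Los n k + (if k is k'.+1 then 'C(n, k') else 0)
              + (if k is k'.+2 then Los n k' else 0))%N.
Proof. by []. Qed.

Lemma Los_m1 n k : (Los n k)%:Z - Losbar n k = Pm n k.
Proof.
rewrite /Losbar.
suff: forall k, ((Los n k)%:Z - (('C(n, k))%:Z - (Los n k)%:Z) = Pm n k) /\
                ((Los n.+1 k)%:Z - (('C(n.+1, k))%:Z - (Los n.+1 k)%:Z) = Pm n.+1 k).
  by move=> /(_ k) [].
clear k; elim: n => [|n IH] k.
  split.
    by case: k => [|k] //; rewrite Pm_0.
  case: k => [|[|k]] //.
  by rewrite /Pm /= andbF !bin_small.
split; first by case: (IH k).
case: k => [|[|k]]; rewrite LosSS.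
- rewrite Pm_20 -(proj1 (IH 0%N)) !bin0; lia.
- rewrite Pm_21 -(proj1 (IH 1%N)) !bin1 !bin0; lia.
- rewrite Pm_2 -(proj1 (IH k.+2)) -(proj1 (IH k)) !binS; lia.
Qed.

Definition ssum n (A : {set 'I_n}) : nat := (\sum_(i in A) i.+1)%N.
Arguments ssum {n}.
Definition sgsum (n k : nat) : int :=
  \sum_(A : {set 'I_n} | #|A| == k) (-1) ^+ ssum A.

Lemma card_int (T : finType) (S : {set T}) : (#|S|)%:Z = \sum_(A in S) 1.
Proof. by rewrite sumr_const natz. Qed.

Lemma eo_diff n k : (e_sub n k)%:Z - (o_sub n k)%:Z = sgsum n k.
Proof.
rewrite /e_sub /o_sub !card_int /sgsum [RHS](bigID (fun A : {set 'I_n} => odd (ssum A))) /=.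
rewrite addrC; congr (_ + _).
  apply: eq_big => [A|A]; first by rewrite in_set.
  rewrite in_set => /andP [_ H].
  by rewrite -signr_odd (negbTE H).
rewrite -sumrN; apply: eq_big => [A|A]; first by rewrite in_set.
rewrite in_set => /andP [_ H].
by rewrite -signr_odd H.
Qed.

Lemma eo_sum n k : (e_sub n k + o_sub n k)%N = 'C(n, k).
Proof.
rewrite /e_sub /o_sub -!sum1_card.
have := card_draws 'I_n k; rewrite card_ord => <-; rewrite -sum1_card.
rewrite [X in _ = X](bigID (fun A : {set 'I_n} => odd (ssum A))) /= addnC.
congr (_ + _); apply: eq_bigl => A; rewrite !in_set //.
Qed.

Section Rec.
Variable n : nat.
Definition Sl (B : {set 'I_n}) : {set 'I_n.+1} := [set lift ord_max i | i in B].
Definition hh (p : {set 'I_n} * bool) : {set 'I_n.+1} :=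
  if p.2 then ord_max |: Sl p.1 else Sl p.1.
Definition hinv (A : {set 'I_n.+1}) : {set 'I_n} * bool :=
  ([set i | lift ord_max i \in A], ord_max \in A).

Lemma mem_Sl B i : (lift ord_max i \in Sl B) = (i \in B).
Proof. by rewrite /Sl mem_imset //; apply: lift_inj. Qed.

Lemma max_Sl B : ord_max \notin Sl B.
Proof.
apply/imsetP => -[x _ /eqP]; by rewrite (negbTE (neq_lift _ _)).
Qed.

Lemma hhK : cancel hh hinv.
Proof.
move=> [B b]; rewrite /hinv /hh /=; congr pair.
  apply/setP => i; rewrite in_set; case: b => //=.
  by rewrite in_setU1 eq_sym (negbTE (neq_lift _ _)) mem_Sl.
  by rewrite mem_Sl.
case: b => /=; first by rewrite setU11.
by rewrite (negbTE (max_Sl B)).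
Qed.

Lemma hinvK : cancel hinv hh.
Proof.
move=> A; rewrite /hinv /hh /=; apply/setP => x.
case: (unliftP ord_max x) => [j ->| ->].
  have Hne : (lift ord_max j == ord_max) = false.
    by rewrite eq_sym (negbTE (neq_lift _ _)).
  case: ifP => _; rewrite ?in_setU1 ?Hne /=;
  by rewrite mem_Sl in_set.
case: ifP => H; first by rewrite setU11.
by rewrite (negbTE (max_Sl _)).
Qed.

Lemma card_Sl B : #|Sl B| = #|B|.
Proof. by rewrite /Sl card_imset //; apply: lift_inj. Qed.

Lemma ssum_Sl B : ssum (Sl B) = ssum B.
Proof.
rewrite /ssum /Sl big_imset /=; last by move=> x y _ _; apply: lift_inj.
by apply: eq_bigr => i _; rewrite /bump leqNgt ltn_ord.
Qed.

Lemma sum_split (F : {set 'I_n.+1} -> int) :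
  \sum_(A : {set 'I_n.+1}) F A = \sum_(B : {set 'I_n}) (F (ord_max |: Sl B) + F (Sl B)).
Proof.
rewrite (reindex hh) /=; last by exists hinv => x _; [apply: hhK | apply: hinvK].
rewrite -(pair_big xpredT xpredT (fun B b => F (hh (B, b)))) /=.
by apply: eq_bigr => B _; rewrite big_bool.
Qed.
End Rec.
Arguments Sl {n}.

Lemma sgsum_rec n k : sgsum n.+1 k =
  sgsum n k + (if k is k'.+1 then (-1) ^+ n.+1 * sgsum n k' else 0).
Proof.
rewrite /sgsum big_mkcond sum_split big_split /= addrC.
congr (_ + _).
  rewrite [RHS]big_mkcond; apply: eq_bigr => B _.
  by rewrite card_Sl ssum_Sl.
rewrite (eq_bigr (fun B : {set 'I_n} => if #|B|.+1 == k then (-1) ^+ n.+1 * (-1) ^+ ssum B else 0)); last first.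
  move=> B _; rewrite cardsU1 max_Sl card_Sl /ssum big_setU1 ?max_Sl //=.
  by rewrite -/(ssum (Sl B)) ssum_Sl exprD.
case: k => [|k].
  by rewrite big1.
by rewrite mulr_sumr [RHS]big_mkcond; apply: eq_bigr => B _; rewrite eqSS; case: ifP; rewrite ?mulr0.
Qed.

Lemma sgsum0 k : sgsum 0 k = (k == 0%N)%:R.
Proof.
rewrite /sgsum big_mkcond (big_pred1 set0) ?cards0 //=.
  by rewrite /ssum big_set0; case: k.
by move=> A /=; apply/esym/eqP/setP => -[].
Qed.

Lemma sgsum_Qm n k : sgsum n k = Qm n k.
Proof.
elim: n k => [|n IH] k; first by rewrite sgsum0 Qm_0.
rewrite sgsum_rec; case: k => [|k]; first by rewrite addr0 IH !Qm_n0.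
by rewrite !IH Qm_rec.
Qed.

Theorem theorem4p1 (n k : nat) :
  poly_congr ((e_sub n k)%:Z%:P + (o_sub n k)%:Z%:P * 'X)
             ('X^('C(k.+1, 2)) * qbin n k) ('X^2 - 1)
  /\
  poly_congr ((Los n k)%:Z%:P + (Losbar n k)%:P * 'X)
             (qbin n k) ('X^2 - 1).
Proof.
rewrite qbinE; split; apply: congr_eval;
  rewrite !(hornerD, hornerN, hornerM, hornerC, hornerX, hornerXn) ?G_one ?G_m1 ?expr1n.
- by rewrite -eo_sum PoszD mulr1 mul1r subrr.
- have := eo_diff n k; rewrite sgsum_Qm /Qm => <-.
  by rewrite mulrN1 subrr.
- by rewrite /Losbar mulr1; ring.
- rewrite mulrN1 -Los_m1 subrr //.
Qed.
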